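(* Let $n\ge1$ and let $A$ be a set equipped with an $(n+1)$-ary operation $\theta$, binary operations $\alpha_1,\dots,\alpha_n$ and an element $e\in A$ such that for all $a,b\in A$: $$\alpha_i(a,a)=e\ (1\le i\le n),\qquad \theta(\alpha_1(a,b),\dots,\alpha_n(a,b),b)=a,$$ and such that $\theta$ is 2-associative, i.e. for all $a_1,\dots,a_n,b_1,\dots,b_n,c\in A$, $$\theta(a_1,\dots,a_n,\theta(b_1,\dots,b_n,c))=\theta(\theta(a_1,\dots,a_n,b_1),\dots,\theta(a_1,\dots,a_n,b_n),c).$$ Then $A$ with the binary operation $ab=\theta(a,a,\dots,a,b)$ is a group, and for every $b\in A$, $$b^{-1}=\theta\big(\alpha_1(e,\theta(b,b,\dots,b)),\alpha_2(e,\theta(b,b,\dots,b)),\dots,\alpha_n(e,\theta(b,b,\dots,b)),b\big).$$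
   Context: Here $\theta(b,b,\dots,b)$ denotes $\theta$ applied to $n+1$ copies of $b$, and $\theta(a,a,\dots,a,b)$ denotes $\theta$ with $a$ in the first $n$ arguments and $b$ in the last. *)

(* Defs.v *)
From mathcomp Require Import all_boot.
Set Implicit Arguments. Unset Strict Implicit. Unset Printing Implicit Defensive.

(* An (n+1)-ary operation theta on A is represented as
   theta : ('I_n -> A) -> A -> A, where theta a b = θ(a_0,...,a_{n-1}, b). *)

Definition is_identity (A : Type) (mul : A -> A -> A) (u : A) : Prop :=
  forall a, mul u a = a /\ mul a u = a.

Definition is_group (A : Type) (mul : A -> A -> A) : Prop :=
  (forall a b c, mul a (mul b c) = mul (mul a b) c) /\
  exists u, is_identity mul u /\
    forall a, exists x, mul a x = u /\ mul x a = u.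

Definition is_inverse (A : Type) (mul : A -> A -> A) (b x : A) : Prop :=
  forall u, is_identity mul u -> mul b x = u /\ mul x b = u.

(* Main.v *)
Require Import Defs.
From mathcomp Require Import all_boot.
From Stdlib Require Import FunctionalExtensionality.

Theorem proposition4p3 (n : nat) (hn : (0 < n)%N) (A : Type)
  (theta : ('I_n -> A) -> A -> A) (alpha : 'I_n -> A -> A -> A) (e : A)
  (Halpha_diag : forall (i : 'I_n) (a : A), alpha i a a = e)
  (Htheta_alpha : forall a b : A, theta (fun i => alpha i a b) b = a)
  (H2assoc : forall (a b : 'I_n -> A) (c : A),
      theta a (theta b c) = theta (fun i => theta a (b i)) c) :
  let mul := fun a b : A => theta (fun _ => a) b in
  is_group mul /\
  forall b : A,
    is_inverse mul b
      (theta (fun i => alpha i e (theta (fun _ => b) b)) b).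
Proof.
move=> mul.
have assoc : forall a b c, mul a (mul b c) = mul (mul a b) c.
  by move=> a b c; rewrite /mul H2assoc.
have lid : forall x, mul e x = x.
  move=> x; have := Htheta_alpha x x.
  have -> : (fun i => alpha i x x) = (fun _ => e).
    by apply: functional_extensionality => i; rewrite Halpha_diag.
  by [].
have key : forall a c, theta a c = mul (theta a e) c.
  move=> a c; rewrite /mul -H2assoc; congr (theta a); symmetry; exact: lid.
set L := fun b => theta (fun i => alpha i e b) e.
have linv : forall b, mul (L b) b = e.
  by move=> b; rewrite /L -key Htheta_alpha.
have rinv : forall b y, mul y b = e -> mul b y = e.
  move=> b y hy.
  rewrite -(lid (mul b y)) -{1}(linv y) -assoc (assoc y b y) hy lid.
  exact: linv.
have rid : forall b, mul b e = b.
  move=> b; have -> : mul b e = mul b (mul (L b) b) by rewrite linv.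
  by rewrite assoc (rinv b (L b) (linv b)); exact: lid.
have uniq : forall u, is_identity mul u -> u = e.
  by move=> u hu; have [h1 _] := hu e; rewrite -h1 rid.
have inv_eq : forall b, theta (fun i => alpha i e (theta (fun _ => b) b)) b
                        = mul (L (mul b b)) b.
  by move=> b; rewrite key.
split.
  split; first exact: assoc.
  exists e; split; first by move=> a; split; [exact: lid | exact: rid].
  move=> a; exists (L a); split; [apply: rinv|]; exact: linv.
move=> b u hu; rewrite (uniq u hu) inv_eq.
have h : mul (mul (L (mul b b)) b) b = e by rewrite -assoc linv.
split; [exact: rinv|exact: h].
Qed.
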